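(* Let $C>0$ and $p_0\in(0,1)$ with $Cp_0<1$ be constants such that for every $0<p\le p_0$ and $q\in[0,1]$, $\mathcal G(p,q)$ survives with positive probability whenever $q<\frac25p(1-Cp)$ and dies out almost surely whenever $q>\frac25p(1+Cp)$. Then there exist $C'>0$ and $\Omega_0\in\mathbb N$ such that for every integer $\Omega\ge\Omega_0$ the following holds. For any $\rho\in\big(0,(1+\min(p_0,(2C)^{-1}))(\Omega-1)^{-1}\big]$ let $p(\rho)=(\Omega-1)\rho-1$, let $q_b=(\Omega-1)^{-2}$ and $\hat\rho_c=(\Omega-1)^{-1}+\frac52(\Omega-1)^{-3}$. If $\rho>\hat\rho_c+C'\Omega^{-5}$, then $\mathcal G(p(\rho),q_b)$ survives with positive probability; if $\rho<\hat\rho_c-C'\Omega^{-5}$, then $\mathcal G(p(\rho),q_b)$ dies out almost surely.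
   Context: For $p>-1$ and $q\in[0,1]$ the graph process $\mathcal G(p,q)=(G_n)_{n\ge0}$, $G_n=(V_n,E_n)$, is defined recursively. For each $n$, $I_n\subseteq V_n$ is the set of vertices of the $n$-th generation: $I_0=V_0$ and $I_n=V_n\setminus V_{n-1}$ for $n\ge1$. $G_0$ is a single vertex with no edges. For $n\ge1$, given $G_{n-1}$: 1. For each $u\in I_{n-1}$ let $k_u$ be the number of vertices of $G_{n-1}$ at graph distance exactly $3$ from $u$. Each $u\in I_{n-1}$ has an independent Poisson$(1+p)$ number of potential offspring, and each potential offspring is independently deleted with probability $1-(1-q)^{k_u}$. Form $\tilde G_n$ by adding to $G_{n-1}$ a new vertex for each surviving offspring, joined by an edge to its parent; let $\tilde I_n$ be the set of these new vertices, arbitrarily ordered, $Y_n=|\tilde I_n|$. 2. Let $(B_{i,j})_{1\le i<j\le Y_n}$ be i.i.d. Bernoulli$(q)$. For $i<j$, if the $i$th and $j$th vertices of $\tilde I_n$ are at graph distance exactly $4$ in $\tilde G_n$ and $B_{i,j}=1$, identify them. Form $G_n$ and $I_n$ by merging each equivalence class of the equivalence relation generated by these identifications into one vertex, with edge set the union of their edge sets (multi-edges replaced by single edges). Let $Z_n=|I_n|$. The process survives if $Z_n>0$ for all $n\ge1$; otherwise it dies out. *)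

(* Defs.v *)
From HB Require Import structures.
From mathcomp Require Import all_boot all_order all_algebra.
From mathcomp Require Import boolp classical_sets reals ereal esum.
From mathcomp Require Import sequences.
From mathcomp.analysis Require Import exp.
Set Implicit Arguments. Unset Strict Implicit. Unset Printing Implicit Defensive.
Import Order.TTheory GRing.Theory Num.Theory.
Local Open Scope ring_scope.

Definition edges := seq (nat * nat).

Definition nbrs (E : edges) (x : nat) : seq nat :=
  [seq e.2 | e <- E & e.1 == x] ++ [seq e.1 | e <- E & e.2 == x].

(* ball E x k : the vertices at graph distance <= k from x (with repetitions) *)
Fixpoint ball (E : edges) (x : nat) (k : nat) : seq nat :=
  match k with
  | 0 => [:: x]
  | k'.+1 => let b := ball E x k' in b ++ flatten [seq nbrs E y | y <- b]
  end.

Definition at_dist (E : edges) (x y k : nat) : bool :=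
  (y \in ball E x k) && (if k is k'.+1 then y \notin ball E x k' else true).

(* nv : vertex labels used are 0..nv-1 (labels not incident to any edge and
   not in gen are phantom isolated labels left over after merging; they are at
   infinite distance from everything and play no role);
   edg : edge list; gen : the current generation I_{n-1}, in some order. *)
Record state := State { nv : nat; edg : edges; gen : seq nat }.

Definition init_state : state := State 1 [::] [:: 0%N].

Definition kcount (s : state) (u : nat) : nat :=
  count (fun v => at_dist (edg s) u v 3) (iota 0 (nv s)).

(* Random input for one generation:
   - cnt : number of potential offspring of each u in gen (in order),
   - del : deletion bit of each potential offspring (true = deleted),
   - B   : B_{i,j} for 0 <= i < j < Y, row i listing j = i+1 .. Y-1. *)
Definition input := (seq nat * seq bool * seq (seq bool))%type.

Definition pot_parents (s : state) (cnt : seq nat) : seq nat :=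
  flatten [seq nseq x.2 x.1 | x <- zip (gen s) cnt].

Definition surv_parents (s : state) (cnt : seq nat) (del : seq bool) : seq nat :=
  [seq x.1 | x <- zip (pot_parents s cnt) del & ~~ x.2].

Definition bitB (B : seq (seq bool)) (i j : nat) : bool :=
  nth false (nth [::] B i) (j - i.+1).

Section Step.
Variables (s : state) (x : input).
Let cnt := x.1.1.
Let del := x.1.2.
Let B := x.2.
Let sp := surv_parents s cnt del.
Let Y := size sp.
Definition tildeE : edges := edg s ++ [seq (nv s + i, nth 0 sp i)%N | i <- iota 0 Y].
(* identification edges among new vertices *)
Definition idE : edges :=
  [seq (nv s + ij.1, nv s + ij.2)%N | ij <- allpairs pair (iota 0 Y) (iota 0 Y) &
     [&& ij.1 < ij.2, at_dist tildeE (nv s + ij.1) (nv s + ij.2) 4 & bitB B ij.1 ij.2]%N].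
(* representative (least label) of the equivalence class generated *)
Definition rep (v : nat) : nat := foldr minn v (ball idE v Y).
Definition mapv (v : nat) : nat := if (v < nv s)%N then v else rep v.
Definition step : state :=
  State (nv s + Y) [seq (mapv e.1, mapv e.2) | e <- tildeE]
        (undup [seq rep (nv s + i) | i <- iota 0 Y]).
Definition Ysize := Y.
End Step.

Section Prob.
Variables (R : realType) (p q : R).

Definition poisson (lam : R) (k : nat) : R := expR (- lam) * lam ^+ k / (k`!)%:R.

Definition well_shaped (s : state) (x : input) : bool :=
  [&& size x.1.1 == size (gen s), size x.1.2 == sumn x.1.1 &
      shape x.2 == [seq (Ysize s x - i.+1)%N | i <- iota 0 (Ysize s x)]].

Definition weight (s : state) (x : input) : R :=
  if well_shaped s x then
    (\prod_(y <- zip (gen s) x.1.1) poisson (1 + p) y.2) *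
    (\prod_(y <- zip (pot_parents s x.1.1) x.1.2)
        (if y.2 then 1 - (1 - q) ^+ kcount s y.1 else (1 - q) ^+ kcount s y.1)) *
    (\prod_(row <- x.2) \prod_(b <- row) (if b then q else 1 - q))
  else 0.

(* alive n s = P(Z_1 > 0, ..., Z_n > 0) for the process started from s *)
Fixpoint alive (n : nat) (s : state) : \bar R :=
  match n with
  | 0 => 1%E
  | n'.+1 => \esum_(x in [set: input])
       ((weight s x)%:E *
        (if (0 < size (gen (step s x)))%N then alive n' (step s x) else 0%E))%E
  end.

(* survival probability of G(p,q): P(Z_n > 0 for all n) = inf_n P(Z_1..Z_n > 0) *)
Definition surv_prob : \bar R := ereal_inf [set alive n init_state | n in [set: nat]].

Definition survives : Prop := (0 < surv_prob)%E.
Definition dies_out : Prop := surv_prob = 0%E.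
End Prob.

(* Main.v *)
Require Import Defs.
From HB Require Import structures.
From mathcomp Require Import all_boot all_order all_algebra.
From mathcomp Require Import boolp classical_sets reals ereal esum.
From mathcomp Require Import sequences fsbigop normedtype.
From mathcomp Require Import ring lra.
From mathcomp.analysis Require Import exp.
Import Order.TTheory GRing.Theory Num.Theory.
Local Open Scope ring_scope.

(* Helper development: extinction for p <= 0 via generating-function bound *)
Module Part1.
Local Open Scope classical_set_scope.
Local Open Scope ereal_scope.
Section S.
Variable R : realType.

Lemma esumZl (T : choiceType) (S : set T) (r : R) (a : T -> \bar R) :
  (0 <= r)%R -> (forall i, 0 <= a i) ->
  \esum_(i in S) (r%:E * a i) = r%:E * \esum_(i in S) a i.
Proof.
move=> r0 a0; rewrite /esum -ereal_supZl //; last first.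
  by apply/set0P; exists 0; exists set0; [exact: fsets_set0|rewrite fsbig_set0].
congr ereal_sup; apply/seteqP; split => y /=.
  move=> [A [finA AS] <-]; exists (\sum_(x \in A) a x); first by exists A.
  by rewrite !fsbig_finite// ge0_sume_distrr.
move=> [_ [A [finA AS] <-] <-]; exists A => //.
by rewrite !fsbig_finite// ge0_sume_distrr.
Qed.

Lemma esum_cons (T : choiceType) n (a : seq T -> \bar R) : (forall l, 0 <= a l) ->
  \esum_(l in [set l : seq T | size l = n.+1]) a l =
  \esum_(t in [set: T]) \esum_(l in [set l : seq T | size l = n]) a (t :: l).
Proof.
move=> a0; rewrite esum_esum //.
rewrite (reindex_esum ([set: T] `*`` fun=> [set l : seq T | size l = n])
   [set l : seq T | size l = n.+1] (fun k => k.1 :: k.2)) //.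
split => /=.
- by move=> [t l] [_ /= ->].
- by move=> [t l] [t' l'] _ _ [-> ->].
- move=> [|t l] //= [H]; exists (t, l) => //.
Qed.

Lemma esum_size0 (T : choiceType) (a : seq T -> \bar R) : (forall l, 0 <= a l) ->
  \esum_(l in [set l : seq T | size l = 0%N]) a l = a [::].
Proof.
move=> a0; rewrite (_ : [set l : seq T | size l = 0%N] = [set [::]]) ?esum_set1 //.
by apply/seteqP; split => [[|]|l ->].
Qed.

Lemma esum_prod_seq (T : choiceType) (X : Type) (xs : seq X) (G : X -> T -> R)
    (S : X -> R) :
  (forall x t, 0 <= G x t)%R ->
  (forall x, \esum_(t in [set: T]) (G x t)%:E = (S x)%:E) ->
  \esum_(l in [set l : seq T | size l = size xs])
     (\prod_(y <- zip xs l) G y.1 y.2)%:E = (\prod_(x <- xs) S x)%:E.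
Proof.
move=> G0 GS.
have S0 x : (0 <= S x)%R.
  by rewrite -lee_fin -GS; apply: esum_ge0 => t _; rewrite lee_fin.
have P0 (l : seq (X * T)) : (0 <= \prod_(y <- l) G y.1 y.2)%R.
  by apply: prodr_ge0 => y _.
elim: xs => [|x xs IH].
  by rewrite esum_size0 //= ?big_nil // => l; rewrite lee_fin.
rewrite /= esum_cons; last by move=> l; rewrite lee_fin.
under eq_esum => t _.
  under eq_esum => l _ do rewrite /= big_cons EFinM.
  rewrite esumZl //; last by move=> l; rewrite lee_fin.
  rewrite IH muleC.
  over.
rewrite /= esumZl //; last by move=> t; rewrite lee_fin.
rewrite GS big_cons -EFinM mulrC //.
by apply: prodr_ge0 => ? _.
Qed.

Lemma esum_bool (f : bool -> \bar R) : (forall b, 0 <= f b) ->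
  \esum_(b in [set: bool]) f b = f true + f false.
Proof.
move=> f0; rewrite (esumID [set true]) //.
rewrite setTI esum_set1 //; congr (_ + _).
rewrite (_ : [set: bool] `&` ~` [set true] = [set false]) ?esum_set1 //.
by apply/seteqP; split => [[]|b ->] //=; rewrite /setC /=; case.
Qed.

Lemma nneseries_exp (x : R) : (0 <= x)%R ->
  \sum_(c <oo) ((x ^+ c / (c`!)%:R)%:E) = (expR x)%:E.
Proof.
move=> x0; rewrite /expR -EFin_lim; last exact: is_cvg_series_exp_coeff.
apply: congr_lim; apply/funext => n /=.
by rewrite /series /= sumEFin.
Qed.

Lemma esum_exp (x : R) : (0 <= x)%R ->
  \esum_(c in [set: nat]) ((x ^+ c / (c`!)%:R)%:E) = (expR x)%:E.
Proof.
move=> x0; rewrite -nneseries_esumT ?nneseries_exp // => n.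
by rewrite lee_fin divr_ge0 // exprn_ge0.
Qed.

Lemma esum_poisson (l a : R) : (0 <= l)%R -> (0 <= a)%R ->
  \esum_(c in [set: nat]) ((poisson l c * a ^+ c)%:E) = (expR (l * (a - 1)))%:E.
Proof.
move=> l0 a0.
have E c : (poisson l c * a ^+ c = expR (- l) * ((l * a) ^+ c / (c`!)%:R))%R.
  by rewrite /poisson exprMn !mulrA mulrAC.
under eq_esum => c _ do rewrite E EFinM.
rewrite esumZl ?expR_ge0 //; last by move=> c; rewrite lee_fin divr_ge0 // exprn_ge0 // mulr_ge0.
rewrite esum_exp ?mulr_ge0 // -EFinM -expRD; congr (expR _)%:E.
by rewrite mulrBr mulr1 addrC.
Qed.

Lemma esum_prod_seqT (T : choiceType) (X : Type) (xs : seq X) (G : X -> T -> R)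
    (S : X -> R) :
  (forall x t, 0 <= G x t)%R ->
  (forall x, \esum_(t in [set: T]) (G x t)%:E = (S x)%:E) ->
  \esum_(l in [set: seq T])
     (if size l == size xs then \prod_(y <- zip xs l) G y.1 y.2 else 0)%:E
   = (\prod_(x <- xs) S x)%:E.
Proof.
move=> G0 GS; rewrite -(@esum_prod_seq T X xs G S G0 GS) [in RHS]esum_mkcond.
apply: eq_esum => l _.
case: eqP => [H|H]; first by rewrite mem_set.
by rewrite memNset.
Qed.

Lemma esum_pair (A B : choiceType) (f : A * B -> \bar R) : (forall x, 0 <= f x) ->
  \esum_(x in [set: A * B]) f x = \esum_(a in [set: A]) \esum_(b in [set: B]) f (a, b).
Proof.
move=> f0; rewrite esum_esum //.
rewrite (_ : [set: A] `*`` (fun=> [set: B]) = [set: A * B]).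
  by apply: eq_esum => -[].
by apply/seteqP; split.
Qed.
End S.

End Part1.
Import Part1.
Module Part2.
Local Open Scope classical_set_scope.
Local Open Scope ereal_scope.

Section Proc.
Variable R : realType.

Lemma prod_nseq_zip (T : Type) (f : T -> R) m (row : seq T) : size row = m ->
  (\prod_(y <- zip (nseq m tt) row) f y.2 = \prod_(b <- row) f b)%R.
Proof.
elim: row m => [|b row IH] [|m] //=; first by rewrite !big_nil.
by case=> H; rewrite !big_cons IH.
Qed.

Lemma prod_shape (F : seq bool -> R) (B : seq (seq bool)) (sh : seq nat) :
  (if size B == size sh then
     \prod_(y <- zip sh B) (if size y.2 == y.1 then F y.2 else 0) else 0)%R =
  (if shape B == sh then \prod_(row <- B) F row else 0)%R.
Proof.
elim: B sh => [|row B IH] [|m sh] //=; first by rewrite !big_nil.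
rewrite eqSS !big_cons eqseq_cons.
have := IH sh; case: (eqVneq (shape B) sh) => [<-|Hne].
  rewrite size_map !eqxx => ->.
  by rewrite andbT; case: eqP => _; rewrite ?mul0r.
rewrite andbF; case: (size B == size sh) => // ->.
by rewrite mulr0.
Qed.

Lemma esum_row (f : bool -> R) (m : nat) :
  (forall b, 0 <= f b)%R -> (f true + f false = 1)%R ->
  \esum_(row in [set: seq bool])
     (if size row == m then \prod_(b <- row) f b else 0)%:E = 1.
Proof.
move=> f0 f1.
have := @esum_prod_seqT R bool unit (nseq m tt) (fun _ b => f b) (fun _ => 1%R)
  (fun _ b => f0 b).
rewrite big1 // => <-; last first.
  by move=> _; rewrite esum_bool -?EFinD ?f1 // => b; rewrite lee_fin.
apply: eq_esum => row _; rewrite size_nseq.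
by case: eqP => // H; rewrite prod_nseq_zip.
Qed.

Lemma esum_B (q : R) (sh : seq nat) : (0 <= q <= 1)%R ->
  \esum_(B in [set: seq (seq bool)])
     (if shape B == sh then
        \prod_(row <- B) \prod_(b <- row) (if b then q else 1 - q) else 0)%:E = 1.
Proof.
move=> /andP[q0 q1].
have f0 b : (0 <= (if b then q else 1 - q))%R by case: b => //; rewrite subr_ge0.
have := @esum_prod_seqT R (seq bool) nat sh
  (fun m row => if size row == m then \prod_(b <- row) (if b then q else 1 - q) else 0)%R
  (fun _ => 1%R).
rewrite big1 // => <-.
- apply: eq_esum => B _ /=.
  by rewrite (prod_shape (fun row => \prod_(b <- row) (if b then q else 1 - q))%R).
- move=> m row; case: eqP => _ //; exact: prodr_ge0.
- by move=> m; rewrite esum_row // addrC subrK.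
Qed.

Variables (p q : R).
Hypotheses (hp : (-1 < p)%R) (hq0 : (0 <= q)%R) (hq1 : (q <= 1)%R).

Lemma pois_ge0 (l : R) c : (0 <= l)%R -> (0 <= poisson l c)%R.
Proof.
by move=> l0; rewrite /poisson divr_ge0 // mulr_ge0 ?expR_ge0 // exprn_ge0.
Qed.

Lemma lam_gt0 : (0 < 1 + p)%R.
Proof. by move: hp; rewrite -ltrBlDr sub0r ltrNl. Qed.

Lemma r_ge0 k : (0 <= (1 - q) ^+ k)%R.
Proof. by rewrite exprn_ge0 // subr_ge0. Qed.

Lemma r_le1 k : ((1 - q) ^+ k <= 1)%R.
Proof. by rewrite exprn_ile1 // ?subr_ge0 // lerBlDr lerDl. Qed.

Definition Pc s c := (\prod_(y <- zip (gen s) c) poisson (1 + p) y.2)%R.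
Definition Dl s c d := (\prod_(y <- zip (pot_parents s c) d)
   (if y.2 then 1 - (1 - q) ^+ kcount s y.1 else (1 - q) ^+ kcount s y.1))%R.
Definition BW (B : seq (seq bool)) :=
  (\prod_(row <- B) \prod_(b <- row) (if b then q else 1 - q))%R.
Definition shY s c d :=
  [seq (size (surv_parents s c d) - i.+1)%N | i <- iota 0 (size (surv_parents s c d))].

Lemma weightE s c d B : weight p q s ((c, d), B) =
  if [&& size c == size (gen s), size d == sumn c & shape B == shY s c d]
  then (Pc s c * Dl s c d * BW B)%R else 0%R.
Proof. by []. Qed.

Lemma Pc_ge0 s c : (0 <= Pc s c)%R.
Proof. by apply: prodr_ge0 => y _; apply: pois_ge0; exact: ltW lam_gt0. Qed.

Lemma Dl_ge0 s c d : (0 <= Dl s c d)%R.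
Proof.
apply: prodr_ge0 => y _; case: y.2; rewrite ?r_ge0 //.
by rewrite subr_ge0 r_le1.
Qed.

Lemma BW_ge0 B : (0 <= BW B)%R.
Proof.
by apply: prodr_ge0 => row _; apply: prodr_ge0 => -[] _ //; rewrite subr_ge0.
Qed.

Lemma weight_ge0 s x : (0 <= weight p q s x)%R.
Proof.
case: x => [[c d] B]; rewrite weightE; case: ifP => // _.
by rewrite !mulr_ge0 ?Pc_ge0 ?Dl_ge0 ?BW_ge0.
Qed.

Lemma sumn_unzip2 (g : seq nat) (c : seq nat) :
  (sumn [seq y.2 | y <- zip g c] <= sumn c)%N.
Proof.
elim: g c => [|u g IH] [|j c] //=; exact: leq_add.
Qed.

Lemma size_pot s c : size c = size (gen s) -> size (pot_parents s c) = sumn c.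
Proof.
move=> H; rewrite /pot_parents size_flatten /shape -map_comp.
rewrite (eq_map (g := fun x => x.2)); last by move=> x /=; rewrite size_nseq.
by rewrite -/(unzip2 _) unzip2_zip // H.
Qed.

Lemma size_gen_step s x : (size (gen (step s x)) <= sumn x.1.1)%N.
Proof.
rewrite /step /=; apply: leq_trans (size_undup _) _.
rewrite size_map size_iota /surv_parents size_map size_filter.
apply: leq_trans (count_size _ _) _; rewrite size_zip.
apply: leq_trans (geq_minl _ _) _.
rewrite /pot_parents size_flatten /shape -map_comp.
rewrite (eq_map (g := fun x => x.2)); last by move=> y /=; rewrite size_nseq.
exact: sumn_unzip2.
Qed.

Lemma esum_Dl s c : size c = size (gen s) ->
  \esum_(d in [set: seq bool]) (if size d == sumn c then Dl s c d else 0)%:E = 1.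
Proof.
move=> Hc.
pose G u (b : bool) := (if b then 1 - (1 - q) ^+ kcount s u else (1 - q) ^+ kcount s u)%R.
have G0 u b : (0 <= G u b)%R by rewrite /G; case: b; rewrite ?r_ge0 // subr_ge0 r_le1.
have := @esum_prod_seqT R bool nat (pot_parents s c) G (fun _ => 1%R) G0.
rewrite big1 // => <-.
  by apply: eq_esum => d _; rewrite size_pot.
move=> u; rewrite esum_bool; last by move=> b; rewrite lee_fin.
by rewrite -EFinD /G subrK.
Qed.

Lemma prod_pow (g c : seq nat) (a : R) : size c = size g ->
  (\prod_(y <- zip g c) a ^+ y.2 = a ^+ sumn c)%R.
Proof.
elim: g c => [|u g IH] [|j c] //=; first by rewrite big_nil.
by case=> H; rewrite big_cons IH // exprD.
Qed.

Lemma prod_const (T : Type) (g : seq T) (r : R) : (\prod_(u <- g) r = r ^+ size g)%R.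
Proof. by elim: g => [|u g IH]; rewrite ?big_nil ?big_cons ?IH ?exprS. Qed.

Lemma esum_Pca s (a : R) : (0 <= a)%R ->
  \esum_(c in [set: seq nat])
     (if size c == size (gen s) then Pc s c * a ^+ sumn c else 0)%:E =
  (expR ((1 + p) * (a - 1)) ^+ size (gen s))%:E.
Proof.
move=> a0.
pose G (u : nat) j := (poisson (1 + p) j * a ^+ j)%R.
have G0 u j : (0 <= G u j)%R.
  by rewrite /G mulr_ge0 ?exprn_ge0 // pois_ge0 // ltW // lam_gt0.
have := @esum_prod_seqT R nat nat (gen s) G (fun _ => expR ((1 + p) * (a - 1))) G0.
rewrite prod_const => <-.
  apply: eq_esum => c _; case: eqP => // Hc.
  by rewrite /G big_split /= prod_pow.
by move=> u; rewrite /G esum_poisson // ltW // lam_gt0.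
Qed.

Lemma esum_Pc s :
  \esum_(c in [set: seq nat]) (if size c == size (gen s) then Pc s c else 0)%:E = 1.
Proof.
have := @esum_Pca s 1%R ler01; rewrite subrr mulr0 expR0 expr1n => <-.
by apply: eq_esum => c _; rewrite expr1n mulr1.
Qed.

Lemma esum_Pch s (a : R) : (0 <= a <= 1)%R ->
  \esum_(c in [set: seq nat])
     (if size c == size (gen s) then Pc s c * (1 - a ^+ sumn c) else 0)%:E =
  (1 - expR ((1 + p) * (a - 1)) ^+ size (gen s))%:E.
Proof.
move=> /andP[a0 a1].
have h0 n : (0 <= 1 - a ^+ n)%R by rewrite subr_ge0 exprn_ile1.
have := esum_Pc s.
rewrite (_ : \esum_(c in _) _ = 
   \esum_(c in [set: seq nat])
     ((if size c == size (gen s) then Pc s c * (1 - a ^+ sumn c) else 0)%:E +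
      (if size c == size (gen s) then Pc s c * a ^+ sumn c else 0)%:E)); last first.
  apply: eq_esum => c _; rewrite -EFinD; case: ifP => _; rewrite ?addr0 //.
  by rewrite -mulrDr subrK mulr1.
rewrite esumD; first last.
- by move=> c _; case: ifP; rewrite lee_fin // mulr_ge0 ?Pc_ge0 ?exprn_ge0.
- by move=> c _; case: ifP; rewrite lee_fin // mulr_ge0 ?Pc_ge0.
rewrite esum_Pca // => H.
by rewrite EFinB -H addeK.
Qed.

Lemma esum_weight s (a : R) : (0 <= a <= 1)%R ->
  \esum_(x in [set: input])
     (weight p q s x * (1 - a ^+ sumn x.1.1))%:E =
  (1 - expR ((1 + p) * (a - 1)) ^+ size (gen s))%:E.
Proof.
move=> /andP[a0 a1].
have h0 n : (0 <= 1 - a ^+ n)%R by rewrite subr_ge0 exprn_ile1.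
have inner (cd : seq nat * seq bool) :
  \esum_(B in [set: seq (seq bool)]) (weight p q s (cd, B) * (1 - a ^+ sumn cd.1))%:E =
  (if (size cd.1 == size (gen s)) && (size cd.2 == sumn cd.1)
   then Pc s cd.1 * Dl s cd.1 cd.2 * (1 - a ^+ sumn cd.1) else 0)%:E.
  case: cd => c d /=.
  under eq_esum => B _.
    rewrite (_ : (weight p q s (c, d, B) * (1 - a ^+ sumn c))%:E =
      (if (size c == size (gen s)) && (size d == sumn c)
       then Pc s c * Dl s c d * (1 - a ^+ sumn c) else 0)%:E *
      (if shape B == shY s c d then BW B else 0)%:E); last first.
      rewrite weightE -EFinM /=; congr EFin.
      case: (size c == _); rewrite /= ?mul0r //.
      case: (size d == _); rewrite /= ?mul0r //.
      case: (shape B == _); rewrite /= ?mul0r ?mulr0 //.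
      by rewrite mulrAC.
    over.
  rewrite /= esumZl; first last.
  - by move=> B; case: ifP; rewrite lee_fin // BW_ge0.
  - by case: ifP => // _; rewrite !mulr_ge0 ?Pc_ge0 ?Dl_ge0.
  rewrite esum_B; last by rewrite hq0 hq1.
  by rewrite mule1.
rewrite esum_pair; last by move=> x; rewrite lee_fin mulr_ge0 ?weight_ge0.
under eq_esum => cd _ do rewrite inner.
rewrite /= esum_pair; last first.
  by move=> [c d]; case: ifP; rewrite lee_fin // !mulr_ge0 ?Pc_ge0 ?Dl_ge0.
rewrite -esum_Pch; last by rewrite a0 a1.
apply: eq_esum => c _.
case: eqP => Hc /=; last by rewrite esum1.
under eq_esum => d _.
  rewrite (_ : (if size d == sumn c then Pc s c * Dl s c d * (1 - a ^+ sumn c) else 0)%:E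
     = (Pc s c * (1 - a ^+ sumn c))%:E * (if size d == sumn c then Dl s c d else 0)%:E);
    last by rewrite -EFinM; case: ifP; rewrite ?mulr0 // mulrAC.
  over.
rewrite /= esumZl; first last.
- by move=> d; case: ifP; rewrite lee_fin // Dl_ge0.
- by rewrite mulr_ge0 ?Pc_ge0.
by rewrite esum_Dl // mule1.
Qed.
End Proc.

End Part2.
Import Part2.
Module Part3.
Local Open Scope classical_set_scope.
Local Open Scope ereal_scope.

Section Ext.
Variable R : realType.
Variables (p q : R).
Hypotheses (hp : (-1 < p)%R) (hp0 : (p <= 0)%R) (hq0 : (0 <= q)%R) (hq1 : (q <= 1)%R).

Fixpoint aseq (n : nat) : R :=
  if n is n'.+1 then expR ((1 + p) * (aseq n' - 1)) else 0%R.

Lemma aseq01 n : (0 <= aseq n <= 1)%R.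
Proof.
elim: n => [|n IH] /=; first by rewrite lexx ler01.
rewrite expR_ge0 expR_le1 /=.
move: IH => /andP[_ a1].
by rewrite mulr_ge0_le0 ?subr_le0 // ltW // lam_gt0.
Qed.

Lemma alive_ge0 n s : 0 <= alive p q n s.
Proof.
elim: n s => [|n IH] s /=; first by [].
apply: esum_ge0 => x _; apply: mule_ge0; first by rewrite lee_fin weight_ge0.
by case: ifP.
Qed.

Lemma alive_bound n s : (0 < size (gen s))%N ->
  alive p q n s <= (1 - aseq n ^+ size (gen s))%:E.
Proof.
elim: n s => [|n IH] s sp /=.
  by rewrite expr0n; case: (size (gen s)) sp => // k _; rewrite subr0.
have /andP[a0 a1] := aseq01 n.
rewrite -(@esum_weight R p q hp hq0 hq1) ?aseq01 //.
apply: le_esum => x _.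
rewrite EFinM; apply: lee_wpmul2l; first by rewrite lee_fin weight_ge0.
case: ifP => sp'.
  apply: (le_trans (IH (step s x) sp')); rewrite lee_fin lerB //.
  apply: ler_wiXn2l => //; exact: size_gen_step.
by rewrite lee_fin subr_ge0 exprn_ile1.
Qed.


Lemma b_step n : (1 - aseq n.+1 <= (1 - aseq n) - (1 - aseq n) ^+ 2 / 4)%R.
Proof.
have /andP[a0 a1] := aseq01 n.
set b := (1 - aseq n)%R.
have b0 : (0 <= b)%R by rewrite subr_ge0.
have b1 : (b <= 1)%R by rewrite lerBlDr lerDl.
have lam0 := @lam_gt0 R p hp.
have E1 : (expR (- b) <= aseq n.+1)%R.
  rewrite /= ler_expR (_ : aseq n - 1 = - b)%R; last by rewrite opprB.
  by rewrite mulrN lerN2; apply: ler_piMl => //; rewrite gerDl.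
have E2 : ((1 - b / 2) ^+ 2 <= expR (- b))%R.
  rewrite (_ : - b = - (b / 2) + - (b / 2))%R; last by field.
  rewrite expRD expr2; apply: ler_pM; try lra.
    exact: expR_ge1Dx.
  exact: expR_ge1Dx.
have : ((1 - b / 2) ^+ 2 = 1 - b + b ^+ 2 / 4)%R by rewrite !expr2; field.
lra.
Qed.

Lemma b_small (eps : R) : (0 < eps)%R -> exists n, (1 - aseq n < eps)%R.
Proof.
move=> e0.
have claim n : (forall m, (m < n)%N -> eps <= 1 - aseq m)%R ->
    (1 - aseq n <= 1 - n%:R * eps ^+ 2 / 4)%R.
  elim: n => [|n IH] H; first by rewrite /= mul0r mul0r subr0.
  have H1 : (eps <= 1 - aseq n)%R by apply: H.
  have IH' := IH (fun m hm => H m (ltnW hm)).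
  have := b_step n.
  have : (eps ^+ 2 <= (1 - aseq n) ^+ 2)%R by rewrite lerXn2r // nnegrE ltW // (lt_le_trans e0).
  rewrite -[n.+1]addn1 natrD; lra.
pose N := Num.Def.archi_bound (4 / eps ^+ 2)%R.
have HN : (4 / eps ^+ 2 < N%:R)%R.
  by apply: archi_boundP; rewrite divr_ge0 // exprn_ge0 // ltW.
case: (boolP (has (fun m => 1 - aseq m < eps)%R (iota 0 N))).
  by move=> /hasP [m _ Hm]; exists m.
move=> /hasPn Hall; exists N.
have HbN : (1 - aseq N <= 1 - N%:R * eps ^+ 2 / 4)%R.
  apply: claim => m hm; have := Hall m; rewrite mem_iota add0n hm => /(_ isT).
  by rewrite -leNgt.
have e2 : (0 < eps ^+ 2)%R by rewrite exprn_gt0.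
have : (1 < N%:R * eps ^+ 2 / 4)%R.
  rewrite ltr_pdivlMr // mul1r.
  move: HN; rewrite -(ltr_pM2r e2) divfK //; exact: lt0r_neq0.
lra.
Qed.

Lemma dies_nonpos : dies_out p q.
Proof.
rewrite /dies_out /surv_prob; apply/eqP; rewrite eq_le; apply/andP; split.
  apply/lee_addgt0Pr => e e0; rewrite add0e.
  have [n Hn] := @b_small e e0.
  apply: ge_ereal_inf; exists (alive p q n init_state); first by exists n.
  apply: (le_trans (@alive_bound n init_state _)) => //=.
  by rewrite expr1 lee_fin ltW.
apply: le_ereal_inf_tmp => _ [n _ <-]; exact: alive_ge0.
Qed.
End Ext.

End Part3.
Import Part3.
Module Part5.
Section Ar.
Variable R : realType.

Lemma surv_arith (C C' a e p : R) : 0 < C -> C' = 800 * C -> 0 < a ->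
  20 * C * a <= 1 -> 4 * C * C' * a ^+ 2 <= 1 ->
  C' * a ^+ 2 / 32 <= e -> e <= C' * a ^+ 2 ->
  5 / 2 * a + e < p -> 2 * C * p <= 1 -> a < 2 / 5 * p * (1 - C * p).
Proof.
move=> C0 HC' a0 h1 h2 h3 h4 h5 h6.
have Ca : 0 < C * a ^+ 2 by rewrite mulr_gt0 ?exprn_gt0.
have e0 : 0 < e by rewrite HC' in h3; lra.
have f1 : 0 <= (p - (5 / 2 * a + e)) * (1 - C * (p + (5 / 2 * a + e))).
  apply: mulr_ge0; first by rewrite subr_ge0 ltW.
  have : C * (5 / 2 * a + e) <= C * p by rewrite ler_pM2l ?ltW.
  lra.
have g1 : 5 / 2 * C * a ^+ 2 <= e / 10 by rewrite HC' in h3; lra.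
have g2 : 2 * C * a * e <= e / 10.
  have : (20 * C * a) * e <= 1 * e by rewrite ler_pM2r.
  lra.
have g3 : 2 / 5 * C * e ^+ 2 <= e / 10.
  have : (4 * C * C' * a ^+ 2) * e <= 1 * e by rewrite ler_pM2r.
  have : C * e * e <= C * e * (C' * a ^+ 2) by rewrite ler_pM2l ?mulr_gt0.
  rewrite expr2; lra.
rewrite !expr2 in g1 g3; lra.
Qed.

Lemma dies_arith (C a e p : R) : 0 < C -> 0 < a -> 25 * C * a ^+ 2 <= e ->
  0 < p -> p < 5 / 2 * a - e -> 2 / 5 * p * (1 + C * p) < a.
Proof.
move=> C0 a0 h1 p0 h2.
have Ca : 0 < C * a ^+ 2 by rewrite mulr_gt0 ?exprn_gt0.
have e0 : 0 < e by lra.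
have Cp : C * p <= C * (5 / 2 * a) by rewrite ler_pM2l //; lra.
have Cp0 : 0 <= C * p by rewrite mulr_ge0 ?ltW.
have s1 : p * (1 + C * p) < (5 / 2 * a - e) * (1 + C * p).
  by rewrite ltr_pM2r; lra.
have s2 : (5 / 2 * a - e) * (1 + C * p) <= (5 / 2 * a - e) * (1 + C * (5 / 2 * a)).
  by rewrite ler_pM2l; lra.
have Cae : 0 <= C * a * e.
  by rewrite mulr_ge0 ?mulr_ge0 ?ltW //; lra.
rewrite expr2 in h1; lra.
Qed.
End Ar.

End Part5.
Import Part5.

Theorem corollary1p2 (R : realType) (C p0 : R)
  (hC : 0 < C) (hp0 : 0 < p0 < 1) (hCp0 : C * p0 < 1)
  (Hthr : forall p q : R, 0 < p <= p0 -> 0 <= q <= 1 ->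
     (q < 2 / 5 * p * (1 - C * p) -> survives p q) /\
     (2 / 5 * p * (1 + C * p) < q -> dies_out p q)) :
  exists C' : R, 0 < C' /\
  exists Omega0 : nat, forall Omega : nat, (Omega0 <= Omega)%N ->
  forall rho : R, 0 < rho ->
    rho <= (1 + Num.min p0 (2 * C)^-1) / (Omega%:R - 1) ->
    let p := (Omega%:R - 1) * rho - 1 in
    let qb := (Omega%:R - 1) ^- 2 in
    let rhoc := (Omega%:R - 1)^-1 + 5 / 2 * (Omega%:R - 1) ^- 3 in
    (rhoc + C' * Omega%:R ^- 5 < rho -> survives p qb) /\
    (rho < rhoc - C' * Omega%:R ^- 5 -> dies_out p qb).
Proof.
pose C' := 800 * C.
have C'0 : 0 < C' by rewrite /C'; lra.
exists C'; split => //.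
pose K := 20 * C + 4 * C * C' + 2.
have CC' : 0 < C * C' by rewrite mulr_gt0.
have K0 : 0 <= K by rewrite /K; lra.
exists (Num.Def.archi_bound K).+2 => Omega HO rho rho0 rhoU p qb rhoc.
have HK := archi_boundP K0.
have HOm : ((Num.Def.archi_bound K).+2%:R <= Omega%:R :> R) by rewrite ler_nat.
move: HOm; rewrite -addn2 natrD => HOm.
set O := Omega%:R in HOm rhoU p qb rhoc *.
set W := O - 1 in rhoU p qb rhoc *.
have WK : K + 1 < W by rewrite /W; lra.
have W1 : 1 <= W by rewrite /K in WK; lra.
have W0 : 0 < W by lra.
have OW : O = W + 1 by rewrite /W; lra.
pose a := qb.
have aW : a * W ^+ 2 = 1 by rewrite /a /qb mulVf // expf_neq0 // lt0r_neq0.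
have a0 : 0 < a by rewrite /a /qb invr_gt0 exprn_gt0.
have aW1 : a * W <= 1.
  have : a * W * 1 <= a * W * W by rewrite ler_pM2l ?mulr_gt0.
  by rewrite mulr1 -mulrA -expr2 aW.
have a1 : a <= 1.
  have : a * 1 <= a * W by rewrite ler_pM2l.
  lra.
have Wrhoc : W * rhoc = 1 + 5 / 2 * a.
  rewrite /rhoc /a /qb; field; exact: lt0r_neq0.
pose e := C' * O ^- 5 * W.
have O0 : 0 < O by lra.
have eU : e <= C' * a ^+ 2.
  rewrite /e -mulrA ler_pM2l //.
  have : W ^+ 5 <= O ^+ 5 by rewrite lerXn2r ?nnegrE ?ltW //; lra.
  rewrite -lef_pV2 ?posrE ?exprn_gt0 // => H.
  have -> : a ^+ 2 = W ^- 5 * W by rewrite /a /qb; field; exact: lt0r_neq0.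
  by rewrite ler_pM2r.
have eL : C' * a ^+ 2 / 32 <= e.
  suff H : a ^+ 2 / 32 <= O ^- 5 * W.
    by move: H => /(ler_wpM2l (ltW C'0)); rewrite !mulrA.
  have : O ^+ 5 <= 32 * W ^+ 5.
    have H2 : (2 * W) ^+ 5 = 32 * W ^+ 5 by ring.
    have H1 : O ^+ 5 <= (2 * W) ^+ 5.
      apply: lerXn2r; rewrite ?nnegrE; [exact: ltW| |]; lra.
    lra.
  have W5 : 0 < 32 * W ^+ 5 by rewrite mulr_gt0 ?exprn_gt0 //; lra.
  rewrite -lef_pV2 ?posrE ?exprn_gt0 // => H.
  have -> : a ^+ 2 / 32 = (32 * W ^+ 5)^-1 * W.
    rewrite /a /qb; field; exact: lt0r_neq0.
  by rewrite ler_pM2r.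
have We : W * (C' * O ^- 5) = e by rewrite /e mulrC.
set m := Num.min p0 (2 * C)^-1 in rhoU.
have m1 : m <= p0 by rewrite /m ge_min lexx.
have m2 : m <= (2 * C)^-1 by rewrite /m ge_min lexx orbT.
have Wrho : rho * W <= 1 + m by rewrite -ler_pdivlMr.
have pm : p <= m by rewrite /p; lra.
have C2 : 0 < 2 * C by lra.
have Cp1 : 2 * C * p <= 1.
  have := ler_wpM2l (ltW C2) (le_trans pm m2).
  by rewrite mulfV // lt0r_neq0.
have pgt : -1 < p by rewrite /p; have := mulr_gt0 W0 rho0; lra.
have q01 : 0 <= qb <= 1 by rewrite ltW // a1.
have h20 : 20 * C * a <= 1.
  have : 20 * C <= W by rewrite /K in WK; lra.
  move=> /(ler_wpM2r (ltW a0)); lra.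
have h4 : 4 * C * C' * a ^+ 2 <= 1.
  have : 4 * C * C' <= W by rewrite /K in WK; lra.
  move=> /(ler_wpM2r (ltW a0)) H.
  have : a ^+ 2 <= a by rewrite expr2 ler_piMl // ltW.
  move=> /(ler_wpM2l (ltW (mulr_gt0 (mulr_gt0 (ltr0Sn _ 3) hC) C'0))).
  lra.
have Ca2 : 0 < C * a ^+ 2 by rewrite mulr_gt0 // exprn_gt0.
have e0 : 0 < e by move: eL; rewrite /C'; lra.
split => H.
  have : W * (rhoc + C' * O ^- 5) < W * rho by rewrite ltr_pM2l.
  rewrite mulrDr Wrhoc We => H'.
  have Hp : 5 / 2 * a + e < p by rewrite /p; lra.
  apply: (Hthr p qb _ q01).1.
    by rewrite (le_trans pm m1) andbT; lra.
  exact: (@surv_arith R C C' a e p hC (erefl _) a0 h20 h4 eL eU Hp Cp1).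
have : W * rho < W * (rhoc - C' * O ^- 5) by rewrite ltr_pM2l.
rewrite mulrBr Wrhoc We => H'.
have Hp : p < 5 / 2 * a - e by rewrite /p; lra.
case: (lerP p 0) => p0'.
  by apply: dies_nonpos => //; case/andP: q01.
apply: (Hthr p qb _ q01).2; first by rewrite p0' (le_trans pm m1).
apply: (@dies_arith R C a e p hC a0 _ p0' Hp).
by move: eL; rewrite /C'; lra.
Qed.
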